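(* Let $c$ be a prefix equivariant statistic, $N\ge1$ and $\theta>0$. Then there exists $k\in\{0,1,\dots,N-1\}$ such that, in the weighted game of best choice defined by $c$ and $\theta$, the positional strategy with parameter $k$ maximizes the probability of winning among all strategies.
   Context: Permutations of $\{1,\dots,m\}$ are written in one-line notation; $\mathfrak S_m$ is the set of all of them. An entry $\pi_j$ is a left-to-right maximum of $\pi$ if $\pi_j>\pi_i$ for all $i<j$. A statistic is a function $c:\bigcup_{m=1}^N\mathfrak S_m\to\mathbb Z_{\ge0}$. The weighted game of best choice is played as follows. A permutation $\pi\in\mathfrak S_N$ is chosen with probability $\theta^{c(\pi)}/\sum_{\sigma\in\mathfrak S_N}\theta^{c(\sigma)}$. For $i=1,\dots,N$, the player sees $\pi^{(i)}$, the unique element of $\mathfrak S_i$ with the same relative order as $\pi_1,\dots,\pi_i$. Based only on this, the player accepts candidate $i$ (ending the game) or rejects it; candidate $N$ is accepted if all earlier ones were rejected. The player wins iff the accepted candidate $i$ has $\pi_i=N$. A strategy is any such decision rule. The positional strategy with parameter $k$ rejects candidates $1,\dots,k$ and accepts the first candidate $i>k$ such that $\pi_i$ is a left-to-right maximum of $\pi$. Let $e_k=12\cdots k$. For $q\in\mathfrak S_k$ and $\pi\in\mathfrak S_m$ ($k\le m\le N$) with $\pi_1<\cdots<\pi_k$, $\sigma_q\cdot\pi\in\mathfrak S_m$ is given by $(\sigma_q\cdot\pi)_i=\pi_{q_i}$ for $i\le k$ and $(\sigma_q\cdot\pi)_i=\pi_i$ for $i>k$. The statistic $c$ is prefix equivariant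 if $c(\pi)-c(\sigma_q\cdot\pi)=c(e_k)-c(q)$ for all such $k,q,\pi$. Examples include the number of left-to-right maxima and the number of inversions. *)

(* Defs.v *)
From HB Require Import structures.
From mathcomp Require Import all_boot all_order all_algebra all_fingroup.
Set Implicit Arguments. Unset Strict Implicit. Unset Printing Implicit Defensive.
Import Order.TTheory GRing.Theory Num.Theory.

(* Conventions: a permutation of {1,...,m} is represented by pi : 'S_m, a
   permutation of {0,...,m-1}; one-line notation pi_1 ... pi_m corresponds to
   pi 0, ..., pi (m-1) (shifted down by one).  Positions are 0-based. *)

(* Build a permutation from a function; the fallback 1 is never used in the
   definitions below, since the functions passed are injective. *)
Definition mkperm n (f : 'I_n -> 'I_n) : 'S_n :=
  match @injectiveP _ _ f with
  | ReflectT H => perm H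
  | ReflectF _ => 1%g
  end.

Definition statistic := forall m : nat, 'S_m -> nat.

(* sigma_q . pi  with q in S_k and pi in S_m (k <= m): the position map
   i |-> q_i for i < k, i |-> i otherwise; (sigma_q . pi)_i = pi_(ext q i).
   In mathcomp (s * t) x = t (s x), so sigma_q . pi = ext_perm q * pi. *)
Definition ext_fun k m (q : 'S_k) (i : 'I_m) : 'I_m :=
  if insub (val i) : option 'I_k is Some j then insubd i (val (q j)) else i.

Definition ext_perm k m (q : 'S_k) : 'S_m := mkperm (@ext_fun k m q).

Definition sigma_act k m (q : 'S_k) (pi : 'S_m) : 'S_m := (ext_perm m q * pi)%g.

Definition incr_prefix k m (pi : 'S_m) : Prop :=
  forall i j : 'I_m, i < j -> j < k -> pi i < pi j.

(* prefix equivariance, required on the domain of the statistic: sizes <= N *)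
Definition prefix_equivariant (N : nat) (c : statistic) : Prop :=
  forall (k m : nat) (q : 'S_k) (pi : 'S_m),
    0 < k -> k <= m -> m <= N -> incr_prefix k pi ->
    ((c m pi)%:Z - (c m (sigma_act q pi))%:Z = (c k 1%g)%:Z - (c k q)%:Z)%R.

(* pi^(i+1): the standardization of the first i+1 entries pi 0 .. pi i
   (relative rank among them), as an element of 'S_(i.+1). *)
Definition std_fun n (pi : 'S_n) (i : nat) (j : 'I_i.+1) : 'I_i.+1 :=
  inord #|[pred l : 'I_n | (l <= i) &&
            [exists p : 'I_n, (val p == val j) && (pi l < pi p)]]|.

Definition std n (pi : 'S_n) (i : nat) : 'S_i.+1 := mkperm (@std_fun n pi i).

(* A strategy: at (0-based) candidate i, decides (true = accept) based only on
   pi^(i+1). *)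
Definition strategy := forall i : nat, 'S_i.+1 -> bool.

(* 0-based index of the accepted candidate: first i < N-1 accepted,
   otherwise the last candidate N-1. *)
Definition stop_time N (s : strategy) (pi : 'S_N) : nat :=
  find (fun i => s i (std pi i)) (iota 0 N.-1).

Definition wins N (s : strategy) (pi : 'S_N) : bool :=
  [exists i : 'I_N, (val i == stop_time s pi) && (val (pi i) == N.-1)].

Definition win_prob (R : realFieldType) (theta : R) (c : statistic) N
    (s : strategy) : R :=
  ((\sum_(pi : 'S_N | wins s pi) theta ^+ (c N pi)) /
   (\sum_(pi : 'S_N) theta ^+ (c N pi)))%R.

(* Positional strategy with parameter k: reject candidates 1..k (0-based
   i < k), then accept the first left-to-right maximum, i.e. the current
   entry is the largest of pi^(i+1). *)
Definition positional (k : nat) : strategy :=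
  fun i sigma => (k <= i) && (sigma ord_max == ord_max).

(* Main.v *)
Require Import Defs.
From HB Require Import structures.
From mathcomp Require Import all_boot all_order all_algebra all_fingroup.
From mathcomp Require Import zify.
From mathcomp Require Import ring lra.
Set Implicit Arguments. Unset Strict Implicit. Unset Printing Implicit Defensive.
Import Order.TTheory GRing.Theory Num.Theory.

Lemma mkpermE n (f : 'I_n -> 'I_n) : injective f -> mkperm f =1 f.
Proof.
move=> inj x; rewrite /mkperm; case: injectiveP => H; first by rewrite permE.
by case: H.
Qed.

Lemma card_ltord n m : m <= n -> #|[pred l : 'I_n | l < m]| = m.
Proof.
move=> hmn.
have inj : injective (fun j : 'I_m => widen_ord hmn j).
  by move=> a b /(congr1 val) /= /val_inj.
rewrite -[RHS](card_ord m) -(card_image inj).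
apply: eq_card => x /=; rewrite inE /=; apply/idP/idP.
  move=> hx; apply/imageP; exists (Ordinal hx) => //; exact: val_inj.
by case/imageP => y _ ->; rewrite /= ltn_ord.
Qed.

Lemma perm_rank m (t : 'S_m) a : val (t a) = #|[pred b | t b < t a]|.
Proof.
rewrite -[RHS](card_image (@perm_inj _ t)).
rewrite -[X in X = _](card_ltord (ltnW (ltn_ord (t a)))).
apply: eq_card => x /=; rewrite !inE /=; apply/idP/idP.
  move=> hx; apply/imageP; exists (t^-1 x)%g.
    by rewrite inE /= permKV.
  by rewrite permKV.
by case/imageP => y; rewrite inE => hy ->.
Qed.

Lemma perm_order_eq m (t1 t2 : 'S_m) :
  (forall a b, (t1 a < t1 b) = (t2 a < t2 b)) -> t1 = t2.
Proof.
move=> h; apply/permP => a; apply: val_inj.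
by rewrite (perm_rank t1) (perm_rank t2); apply: eq_card => b; rewrite !inE /= h.
Qed.


Section Std.
Variables (n : nat) (pi : 'S_n) (i : nat) (hi : i < n).

Definition cntx (x : 'I_n) := #|[pred l : 'I_n | (l <= i) && (pi l < pi x)]|.

Lemma cnt_le (x : 'I_n) : x <= i -> cntx x <= i.
Proof.
move=> hx.
have h1 := card_ltord hi.
rewrite (cardD1 x) inE /= ltnS hx /= add1n in h1.
case: h1 => h1.
rewrite /cntx -[X in _ <= X]h1; apply: subset_leq_card; apply/subsetP => l.
rewrite !inE /= => /andP[hl h]; rewrite ltnS hl andbT.
by apply/eqP => e; move: h; rewrite e ltnn.
Qed.

Lemma cnt_mono (x y : 'I_n) : x <= i -> y <= i -> pi x < pi y -> cntx x < cntx y.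
Proof.
move=> hx hy hxy.
rewrite /cntx (cardD1 x [pred l : 'I_n | (l <= i) && (pi l < pi y)]) inE /= hx hxy /=.
rewrite add1n ltnS; apply: subset_leq_card; apply/subsetP => l.
rewrite !inE /= => /andP[hl h]; rewrite (ltn_trans h hxy) hl !andbT.
by apply/eqP => e; move: h; rewrite e ltnn.
Qed.

Definition emb (a : 'I_i.+1) : 'I_n := widen_ord hi a.

Lemma std_funE (a : 'I_i.+1) : @std_fun n pi i a = inord (cntx (emb a)).
Proof.
rewrite /std_fun /cntx; congr inord; apply: eq_card => l; rewrite !inE.
congr (_ && _); apply/existsP/idP => [[p /andP[/eqP hp h]]|h].
  by have -> : emb a = p by apply: val_inj; rewrite /= hp.
by exists (emb a); rewrite /= eqxx h.
Qed.

Lemma std_fun_val (a : 'I_i.+1) : val (@std_fun n pi i a) = cntx (emb a).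
Proof.
by rewrite std_funE; apply: inordK; rewrite ltnS cnt_le // /emb /= -ltnS.
Qed.

Lemma std_fun_inj : injective (@std_fun n pi i).
Proof.
move=> a b /(congr1 val); rewrite !std_fun_val => e.
have ha : emb a <= i by rewrite /= -ltnS.
have hb : emb b <= i by rewrite /= -ltnS.
case: (ltngtP (pi (emb a)) (pi (emb b))) => h.
- by move: (cnt_mono ha hb h); rewrite e ltnn.
- by move: (cnt_mono hb ha h); rewrite e ltnn.
- have /perm_inj : pi (emb a) = pi (emb b) by apply: val_inj.
  by move/(congr1 val) => /= /val_inj.
Qed.

Lemma stdE (a : 'I_i.+1) : std pi i a = @std_fun n pi i a.
Proof. by rewrite /std mkpermE //; apply: std_fun_inj. Qed.

Lemma std_lt (a b : 'I_i.+1) : (std pi i a < std pi i b) = (pi (emb a) < pi (emb b)).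
Proof.
have ha : emb a <= i by rewrite /= -ltnS.
have hb : emb b <= i by rewrite /= -ltnS.
rewrite !stdE !std_fun_val.
case: (ltngtP (pi (emb a)) (pi (emb b))) => h.
- by rewrite cnt_mono.
- by apply/negbTE; rewrite -leqNgt ltnW // cnt_mono.
- have /perm_inj -> : pi (emb a) = pi (emb b) by apply: val_inj.
  by rewrite ltnn.
Qed.

Lemma std_unique (t : 'S_i.+1) :
  (forall a b, (t a < t b) = (pi (emb a) < pi (emb b))) -> std pi i = t.
Proof. by move=> h; apply: perm_order_eq => a b; rewrite std_lt h. Qed.

End Std.


Lemma std_std n (pi : 'S_n) i j (hi : i < n) (hj : j < n) (hji : j < i.+1) :
  std (std pi i) j = std pi j.
Proof.
symmetry; apply: (@std_unique _ _ _ hj) => a b.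
rewrite (std_lt _ hji) (std_lt _ hi).
have e : forall c, emb hi (emb hji c) = emb hj c by move=> c; apply: val_inj.
by rewrite !e.
Qed.

Section Ext.
Variables (n i : nat) (hi : i < n).

Lemma ext_fun_emb (q : 'S_i.+1) (a : 'I_i.+1) : @ext_fun _ n q (emb hi a) = emb hi (q a).
Proof.
rewrite /ext_fun; case: insubP => [j hj hv | hn].
  have -> : j = a by apply: val_inj; rewrite hv.
  apply: val_inj; rewrite /= insubdK //; exact: (leq_trans (ltn_ord _) hi).
by move: hn; rewrite /= ltn_ord.
Qed.

Lemma ext_fun_out (q : 'S_i.+1) (x : 'I_n) : i < x -> @ext_fun _ n q x = x.
Proof.
move=> hx; rewrite /ext_fun; case: insubP => [j hj hv | hn] //.
by move: hj; rewrite ltnS leqNgt hx.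
Qed.

Lemma embP (x : 'I_n) : x <= i -> {a : 'I_i.+1 | x = emb hi a}.
Proof.
move=> hx; have hx' : x < i.+1 by [].
by exists (Ordinal hx'); apply: val_inj.
Qed.

Lemma ext_fun_inj (q : 'S_i.+1) : injective (@ext_fun _ n q).
Proof.
move=> x y.
case: (leqP x i) => hx; case: (leqP y i) => hy.
- case: (embP hx) => a ->; case: (embP hy) => b ->.
  rewrite !ext_fun_emb => /(congr1 val) /= /val_inj /perm_inj -> //.
- case: (embP hx) => a ->; rewrite ext_fun_emb ext_fun_out // => e.
  by move: hy; rewrite -e /= leqNgt ltnS -ltnS ltn_ord.
- case: (embP hy) => a ->; rewrite ext_fun_emb ext_fun_out // => e.
  by move: hx; rewrite e /= leqNgt ltnS -ltnS ltn_ord.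
- by rewrite !ext_fun_out.
Qed.

Lemma ext_emb (q : 'S_i.+1) (a : 'I_i.+1) : ext_perm n q (emb hi a) = emb hi (q a).
Proof. by rewrite /ext_perm mkpermE ?ext_fun_emb //; apply: ext_fun_inj. Qed.

Lemma ext_out (q : 'S_i.+1) (x : 'I_n) : i < x -> ext_perm n q x = x.
Proof. by move=> hx; rewrite /ext_perm mkpermE ?ext_fun_out //; apply: ext_fun_inj. Qed.

Lemma ext_le (q : 'S_i.+1) (x : 'I_n) : (ext_perm n q x <= i) = (x <= i).
Proof.
case: (leqP x i) => hx.
  by case: (embP hx) => a ->; rewrite ext_emb /= -ltnS ltn_ord.
by rewrite ext_out // leqNgt hx.
Qed.

Lemma extM (q1 q2 : 'S_i.+1) :
  ext_perm n (q1 * q2)%g = (ext_perm n q1 * ext_perm n q2)%g.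
Proof.
apply/permP => x; rewrite permM.
case: (leqP x i) => hx.
  by case: (embP hx) => a ->; rewrite !ext_emb permM.
by rewrite !ext_out.
Qed.

Lemma ext1 : ext_perm n (1 : 'S_i.+1)%g = 1%g.
Proof.
apply/permP => x; rewrite perm1.
case: (leqP x i) => hx.
  by case: (embP hx) => a ->; rewrite ext_emb perm1.
by rewrite ext_out.
Qed.

Lemma ext_inv (q : 'S_i.+1) x : ext_perm n q (ext_perm n (q^-1)%g x) = x.
Proof. by rewrite -permM -extM mulVg ext1 perm1. Qed.

Lemma std_ext (q : 'S_i.+1) (pi : 'S_n) :
  std (ext_perm n q * pi)%g i = (q * std pi i)%g.
Proof.
apply: (@std_unique _ _ _ hi) => a b.
by rewrite !permM (std_lt _ hi) !ext_emb.
Qed.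

End Ext.


Lemma std1_incr n (rho : 'S_n) i (hi : i < n) :
  std rho i = 1%g -> incr_prefix i.+1 rho.
Proof.
move=> h x y hxy hy.
have hx : x <= i by rewrite -ltnS (ltn_trans hxy hy).
case: (embP hi hx) => a ea; case: (embP hi (hy : y <= i)) => b eb.
rewrite ea eb -(std_lt rho hi) h !perm1.
by move: hxy; rewrite ea eb.
Qed.

Lemma weight_eq (c : statistic) n (hPE : prefix_equivariant n c) i (hi : i < n)
  (q : 'S_i.+1) (pi : 'S_n) :
  (c n (ext_perm n q * pi)%g + c i.+1 (std pi i) =
   c n pi + c i.+1 (q * std pi i)%g)%N.
Proof.
set s := std pi i.
set rho := (ext_perm n (s^-1)%g * pi)%g.
have hrho : std rho i = 1%g by rewrite /rho (std_ext hi) mulVg.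
have inc := std1_incr hi hrho.
have e1 : sigma_act s rho = pi.
  by rewrite /sigma_act /rho mulgA -(extM hi) mulgV (ext1 hi) mul1g.
have e2 : sigma_act (q * s)%g rho = (ext_perm n q * pi)%g.
  by rewrite /sigma_act /rho mulgA -(extM hi) -mulgA mulgV mulg1.
have h1 := hPE i.+1 n s rho (ltn0Sn i) hi (leqnn n) inc.
have h2 := hPE i.+1 n (q * s)%g rho (ltn0Sn i) hi (leqnn n) inc.
rewrite e1 in h1; rewrite e2 in h2.
lia.
Qed.


Open Scope ring_scope.

Section Indep.
Variables (R : realFieldType) (theta : R) (htheta : 0 < theta) (c : statistic)
  (n : nat) (hPE : prefix_equivariant n c).

Definition Wt (pi : 'S_n) : R := theta ^+ @c n pi.
Definition PP (A : pred 'S_n) : R := \sum_(pi | A pi) Wt pi.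
Definition Ps i (s : 'S_i.+1) (E : pred 'S_n) : R :=
  \sum_(pi | (std pi i == s) && E pi) Wt pi.

Lemma Wt_ge0 pi : 0 <= Wt pi.
Proof. by rewrite /Wt exprn_ge0 // ltW. Qed.

Lemma PP_ge0 A : 0 <= PP A.
Proof. by apply: sumr_ge0 => pi _; apply: Wt_ge0. Qed.

Lemma thpow_neq0 k : theta ^+ k != 0.
Proof. by rewrite expf_neq0 // gt_eqF. Qed.

Definition einv i (E : pred 'S_n) :=
  forall (q : 'S_i.+1) pi, E (ext_perm n q * pi)%g = E pi.
Definition det i (B : pred 'S_n) :=
  forall pi pi', std pi i = std pi' i -> B pi = B pi'.

Lemma step1 i (hi : (i < n)%N) E (hE : einv i E) (s1 s2 : 'S_i.+1) :
  theta ^+ @c _ s1 * Ps s2 E = theta ^+ @c _ s2 * Ps s1 E.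
Proof.
set q := (s2 * s1^-1)%g.
rewrite /Ps (reindex_inj (mulgI (ext_perm n q))) /=.
rewrite !mulr_sumr; apply: eq_big => pi.
  rewrite hE (std_ext hi); congr (_ && _); apply/eqP/eqP => [h|->].
    by apply: (mulgI q); rewrite h /q mulgKV.
  by rewrite /q mulgKV.
move/andP => [/eqP hs _]; rewrite (std_ext hi) in hs.
have hs' : std pi i = s1 by apply: (mulgI q); rewrite hs /q mulgKV.
rewrite /Wt -!exprD; congr (_ ^+ _).
have := weight_eq hPE hi q pi; rewrite hs hs' => e.
by rewrite addnC e addnC.
Qed.

Lemma PP_part i (B F : pred 'S_n) (hB : det i B) :
  PP (fun pi => B pi && F pi) =
  \sum_(s : 'S_i.+1 | [exists pi, (std pi i == s) && B pi]) Ps s F.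
Proof.
rewrite /PP (partition_big (fun pi => std pi i) predT) //=.
rewrite [RHS]big_mkcond /=; apply: eq_bigr => s _.
case: ifP => [/existsP [pi0 /andP [/eqP h0 hb0]] | hn].
  rewrite /Ps; apply: eq_bigl => pi.
  case: (boolP (std pi i == s)) => /= [/eqP hs | _]; last by rewrite andbF.
  rewrite andbT (hB pi pi0) ?hb0 // hs h0 //.
apply: big_pred0 => pi.
case: (boolP (std pi i == s)) => [/eqP hs | _]; last by rewrite andbF.
case: (boolP (B pi)) => // hb.
by move: hn; have -> : [exists pi, (std pi i == s) && B pi] by
  apply/existsP; exists pi; rewrite hs eqxx.
Qed.

Lemma PP_allE i (E : pred 'S_n) : PP E = \sum_(s : 'S_i.+1) Ps s E.
Proof.
rewrite /PP (partition_big (fun pi => std pi i) predT) //=.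
apply: eq_bigr => s _; rewrite /Ps; apply: eq_bigl => pi; by rewrite andbC.
Qed.

Lemma indep i (hi : (i < n)%N) (B E : pred 'S_n) (hB : det i B) (hE : einv i E) :
  PP (fun pi => B pi && E pi) * PP predT = PP B * PP E.
Proof.
have eB : PP B = PP (fun pi => B pi && true).
  by rewrite /PP; apply: eq_bigl => pi; rewrite andbT.
have eT : PP predT = PP xpredT by [].
rewrite eB eT (PP_part _ hB) (PP_part _ hB) (PP_allE i xpredT) (PP_allE i E).
rewrite !big_distrl /=; apply: eq_bigr => s _.
rewrite !big_distrr /=; apply: eq_bigr => t _.
have hT : einv i xpredT by [].
have a1 := step1 hi hE s t.
have a2 := step1 hi hT s t.
apply: (mulfI (thpow_neq0 (@c _ t))).
rewrite !mulrA -a1 -a2 -!mulrA; congr (_ * _); exact: mulrC.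
Qed.

End Indep.

Close Scope ring_scope.

Section Game.
Variable n : nat.
Local Notation N := n.+1.

Definition Lt t : pred 'S_N :=
  fun pi => [forall l : 'I_N, (l < t) ==> (pi l < pi (inord t))].
Definition Mt t : pred 'S_N :=
  fun pi => [exists l : 'I_N, (l <= t) && (val (pi l) == n)].
Definition alive (s : strategy) t : pred 'S_N :=
  fun pi => all (fun j => ~~ s j (std pi j)) (iota 0 t).

Lemma aliveS s t (pi : 'S_N) : alive s t.+1 pi = alive s t pi && ~~ s t (std pi t).
Proof.
have e : iota 0 t.+1 = iota 0 t ++ [:: t] by rewrite -addn1 iotaD.
by rewrite /alive e all_cat /= andbT.
Qed.

Lemma alive0 s (pi : 'S_N) : alive s 0 pi.
Proof. by []. Qed.

Lemma stop_at s t (pi : 'S_N) : t < n -> alive s t pi -> s t (std pi t) ->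
  stop_time s pi = t.
Proof.
move=> ht hal hs; rewrite /stop_time /=.
have -> : iota 0 n = iota 0 t ++ iota t (n - t).
  by rewrite -iotaD subnKC // ltnW.
rewrite find_cat.
have -> : has (fun i => s i (std pi i)) (iota 0 t) = false.
  by apply/negbTE; rewrite -all_predC.
rewrite size_iota.
case e : (n - t) => [|d]; first by move: ht; rewrite -subn_gt0 e.
by rewrite /= hs addn0.
Qed.

Lemma stop_last s (pi : 'S_N) : alive s n pi -> stop_time s pi = n.
Proof.
move=> hal; rewrite /stop_time /= -[RHS](size_iota 0 n).
by apply: hasNfind; rewrite -all_predC.
Qed.

Lemma wins_at s (pi : 'S_N) t : stop_time s pi = t -> t <= n ->
  wins s pi = (val (pi (inord t)) == n).
Proof.
move=> hst ht; rewrite /wins /= hst; apply/existsP/idP => [[i /andP[/eqP hi h]]|h].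
  by have <- : i = inord t by apply: val_inj; rewrite /= inordK.
by exists (inord t); rewrite /= inordK // eqxx.
Qed.

Lemma top_iff t (pi : 'S_N) : t <= n ->
  (val (pi (inord t)) == n) = Lt t pi && Mt t pi.
Proof.
move=> ht; apply/idP/andP => [/eqP h|[/forallP hL /existsP [l /andP [hl /eqP hv]]]].
  split.
    apply/forallP => l; apply/implyP => hl.
    rewrite h; have := ltn_ord (pi l); rewrite ltnS leq_eqVlt => /orP [/eqP e|//].
    have : pi l = pi (inord t) by apply: val_inj; exact: (etrans e (esym h)).
    by move/perm_inj => e'; move: hl; rewrite e' inordK // ltnn.
  by apply/existsP; exists (inord t); rewrite inordK // leqnn h eqxx.
case: (ltngtP l t) => hlt.
- move: (implyP (hL l) hlt); rewrite hv => h.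
  by move: (ltn_ord (pi (inord t))); rewrite ltnS leqNgt h.
- by move: hl; rewrite leqNgt hlt.
- have e : l = inord t by apply: val_inj; rewrite /= inordK.
  by rewrite -e hv.
Qed.

Lemma Lt_std t (pi : 'S_N) (ht : t < N) : Lt t pi = (std pi t ord_max == ord_max).
Proof.
set s := std pi t.
have key : forall a b : 'I_t.+1, (s a < s b) = (pi (emb ht a) < pi (emb ht b)).
  by move=> a b; rewrite (std_lt pi ht).
have em : emb ht ord_max = inord t by apply: val_inj; rewrite /= inordK.
apply/forallP/eqP => [h|h l].
  apply/eqP; apply: contraT => hne.
  pose l := (s^-1 ord_max)%g.
  have hl : l != ord_max.
    apply/eqP => e; move/eqP: hne; apply; rewrite -{1}e /l permKV //.
  have hlt : l < t by have := ltn_ord l; rewrite ltnS leq_eqVlt => /orP [e|//];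
    case/negP: hl; apply/eqP/val_inj; rewrite /= (eqP e).
  have := implyP (h (emb ht l)) hlt; rewrite -em -key /l permKV => h2.
  by move: (ltn_ord (s ord_max)); rewrite ltnS leqNgt h2.
apply/implyP => hl.
have hl' : l <= t by rewrite ltnW.
case: (embP ht hl') => a ea.
rewrite ea -em -key.
have hne : a != ord_max by apply/eqP => e; move: hl; rewrite ea e /= ltnn.
have : s a != s ord_max by rewrite (inj_eq (@perm_inj _ s)).
rewrite h; have := ltn_ord (s a); rewrite ltnS leq_eqVlt => /orP [/eqP e|//].
by move/eqP; case; apply: val_inj.
Qed.

Lemma Lt0 (pi : 'S_N) : Lt 0 pi.
Proof. by apply/forallP => l. Qed.

Lemma Mtn (pi : 'S_N) : Mt n pi.
Proof.
apply/existsP; exists ((pi^-1)%g ord_max); rewrite -ltnS ltn_ord /=.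
by rewrite permKV.
Qed.

Lemma MtS t (pi : 'S_N) : Mt t pi -> Mt t.+1 pi.
Proof.
move/existsP => [l /andP [hl h]]; apply/existsP; exists l.
by rewrite h (leq_trans hl) // leqnSn.
Qed.

Lemma det_std t (ht : t < N) j (hj : j <= t)
  (f : 'S_j.+1 -> bool) :
  det t (fun pi : 'S_N => f (std pi j)).
Proof.
move=> pi pi' e.
have hjN : j < N by apply: leq_ltn_trans hj ht.
by rewrite -(std_std pi ht hjN hj) -(std_std pi' ht hjN hj) e.
Qed.
End Game.


Section Det.
Variable n : nat.
Local Notation N := n.+1.

Lemma det_alive s t : t < N -> det t (alive s t : pred 'S_N).
Proof.
move=> ht pi pi' e; rewrite /alive; apply: eq_in_all => j.
rewrite mem_iota add0n => /andP [_ hj].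
have hjN : j < N by apply: ltn_trans hj ht.
have hjt : j < t.+1 by apply: ltnW.
by rewrite -(std_std pi ht hjN hjt) -(std_std pi' ht hjN hjt) e.
Qed.

Lemma det_and t (A B : pred 'S_N) : det t A -> det t B ->
  det t (fun pi => A pi && B pi).
Proof. by move=> hA hB pi pi' e; rewrite (hA _ _ e) (hB _ _ e). Qed.

Lemma det_mono i j (B : pred 'S_N) : det i B -> i <= j -> j < N -> det j B.
Proof.
move=> hB hij hj pi pi' e; apply: hB.
have hiN : i < N by apply: leq_ltn_trans hj.
by rewrite -(std_std pi hj hiN hij) -(std_std pi' hj hiN hij) e.
Qed.

Lemma det_Lt t : t < N -> det t (Lt t : pred 'S_N).
Proof.
move=> ht pi pi' e; rewrite (Lt_std pi ht) (Lt_std pi' ht) e //.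
Qed.

Lemma det_sd (s : strategy) t : t < N -> det t (fun pi : 'S_N => s t (std pi t)).
Proof. by move=> ht pi pi' ->. Qed.

Lemma einv_Mt t : t < N -> einv t (Mt t : pred 'S_N).
Proof.
move=> ht q pi; rewrite /Mt; apply/existsP/existsP => [[l /andP [hl h]]|[l /andP [hl h]]].
  exists (ext_perm N q l); rewrite (ext_le ht) hl; by rewrite permM in h.
exists (ext_perm N (q^-1)%g l); rewrite (ext_le ht) hl permM.
by rewrite (ext_inv ht).
Qed.

Lemma einv_Lt t : t < n -> einv t (Lt t.+1 : pred 'S_N).
Proof.
move=> ht; have htN : t < N by apply: ltnW.
have eo : forall q : 'S_t.+1, ext_perm N q (inord t.+1) = inord t.+1.
  by move=> q; rewrite (ext_out htN) // inordK.
move=> q pi; rewrite /Lt; apply/forallP/forallP => h l; apply/implyP => hl.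
  have := implyP (h (ext_perm N (q^-1)%g l)); rewrite !permM eo (ext_inv htN); apply.
  by rewrite ltnS (ext_le htN).
rewrite !permM eo; apply: (implyP (h _)).
by rewrite ltnS (ext_le htN) -ltnS.
Qed.

Lemma einv_neg t (E : pred 'S_N) : einv t E -> einv t (fun pi => ~~ E pi).
Proof. by move=> h q pi; rewrite h. Qed.

End Det.


Open Scope ring_scope.

Section Main.
Variables (R : realFieldType) (theta : R) (htheta : 0 < theta) (c : statistic)
  (n : nat) (hPE : prefix_equivariant n.+1 c).
Local Notation N := n.+1.

Definition P (A : pred 'S_N) : R := PP theta c A.
Definition Z : R := P predT.

Lemma P_ext (A A' : pred 'S_N) : (forall pi, A pi = A' pi) -> P A = P A'.
Proof. by move=> h; rewrite /P /PP; apply: eq_bigl => pi; rewrite h. Qed.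

Lemma P_split (A F : pred 'S_N) :
  P A = P (fun pi => A pi && F pi) + P (fun pi => A pi && ~~ F pi).
Proof. by rewrite /P /PP (bigID F). Qed.

Lemma P0 (A : pred 'S_N) : (forall pi, ~~ A pi) -> P A = 0.
Proof. by move=> h; rewrite /P /PP big_pred0 // => pi; apply/negbTE. Qed.

Lemma P_ge0 A : 0 <= P A.
Proof. exact: PP_ge0. Qed.

Lemma P_mono (A A' : pred 'S_N) : (forall pi, A pi -> A' pi) -> P A <= P A'.
Proof.
move=> h; rewrite (P_split A' A).
have -> : P (fun pi => A' pi && A pi) = P A.
  by apply: P_ext => pi; case: (boolP (A pi)) => hA; rewrite ?andbT ?andbF // h.
by rewrite lerDl P_ge0.
Qed.

Lemma Z_gt0 : 0 < Z.
Proof.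
rewrite /Z /P /PP (bigD1 1%g) //=.
apply: (@lt_le_trans _ _ (Wt theta c (1%g : 'S_N))).
  by rewrite /Wt exprn_gt0.
apply: ler_wpDr => //; apply: sumr_ge0 => pi _; exact: Wt_ge0.
Qed.

Lemma Z_neq0 : Z != 0. Proof. by rewrite gt_eqF // Z_gt0. Qed.

Lemma P_le_Z A : P A <= Z.
Proof. by apply: P_mono. Qed.

Lemma indepP t (ht : (t < N)%N) (B E : pred 'S_N) (hB : det t B) (hE : einv t E) :
  P (fun pi => B pi && E pi) = P B * (P E / Z).
Proof.
have := indep htheta hPE ht hB hE; rewrite -/(P _) -/(P _) -/(P _) -/Z => e.
by rewrite mulrA -e mulfK // Z_neq0.
Qed.

Definition p t := P (Mt t) / Z.
Definition a t := P (Lt t) / Z.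

Lemma p_ge0 t : 0 <= p t.
Proof. by rewrite /p divr_ge0 // ?P_ge0 // ltW // Z_gt0. Qed.
Lemma a_ge0 t : 0 <= a t.
Proof. by rewrite /a divr_ge0 // ?P_ge0 // ltW // Z_gt0. Qed.
Lemma a_le1 t : a t <= 1.
Proof. by rewrite /a ler_pdivrMr ?Z_gt0 // mul1r P_le_Z. Qed.

Lemma p_n : p n = 1.
Proof.
rewrite /p (P_ext (A' := predT)) ?divff ?Z_neq0 // => pi.
by rewrite Mtn.
Qed.

Lemma p_mono t : p t <= p t.+1.
Proof.
rewrite /p; apply: ler_wpM2r; first by rewrite invr_ge0 ltW // Z_gt0.
by apply: P_mono => pi; apply: MtS.
Qed.

Lemma p_mono_le i j : (i <= j)%N -> p i <= p j.
Proof.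
move/subnKC <-; elim: (j - i)%N => [|d IH]; first by rewrite addn0.
by rewrite addnS (le_trans IH) // p_mono.
Qed.

Fixpoint Tr (f t : nat) : R :=
  match f with
  | 0%N => 0
  | f'.+1 => a t * (if Tr f' t.+1 <= p t then p t else Tr f' t.+1)
             + (1 - a t) * Tr f' t.+1
  end.

Definition T t := Tr (N - t) t.
Definition m t := if T t.+1 <= p t then p t else T t.+1.

Lemma T_rec t : (t <= n)%N -> T t = a t * m t + (1 - a t) * T t.+1.
Proof. by move=> ht; rewrite /T /m subSn. Qed.

Lemma T_out t : (n < t)%N -> T t = 0.
Proof. by move=> ht; rewrite /T; have -> : (N - t = 0)%N by apply/eqP; rewrite subn_eq0. Qed.

Lemma Tr_ge0 f t : 0 <= Tr f t.
Proof.
elim: f t => [|f IH] t //=.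
apply: addr_ge0; apply: mulr_ge0; rewrite ?a_ge0 ?subr_ge0 ?a_le1 ?IH //.
by case: ifP => _; rewrite ?p_ge0 ?IH.
Qed.

Lemma T_ge0 t : 0 <= T t. Proof. exact: Tr_ge0. Qed.

Lemma m_ge_p t : p t <= m t.
Proof. by rewrite /m; case: ifP => // /negbT; rewrite -ltNge => /ltW. Qed.
Lemma m_ge_T t : T t.+1 <= m t.
Proof. by rewrite /m; case: ifP. Qed.

Lemma T_anti t : T t.+1 <= T t.
Proof.
case: (leqP t n) => ht.
  rewrite (T_rec ht).
  have e : T t.+1 = a t * T t.+1 + (1 - a t) * T t.+1 by rewrite -mulrDl addrC subrK mul1r.
  rewrite [X in X <= _]e lerD2r ler_wpM2l ?a_ge0 // m_ge_T //.
by rewrite !T_out // ltnW.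
Qed.

Lemma T_anti_le i j : (i <= j)%N -> T j <= T i.
Proof.
move/subnKC <-; elim: (j - i)%N => [|d IH]; first by rewrite addn0.
by rewrite addnS (le_trans _ IH) // T_anti.
Qed.

End Main.

Close Scope ring_scope.

Open Scope ring_scope.

Section Ind.
Variables (R : realFieldType) (theta : R) (htheta : 0 < theta) (c : statistic)
  (n : nat) (hPE : prefix_equivariant n.+1 c).
Local Notation N := n.+1.
Local Notation P := (P theta c).
Local Notation Z := (Z theta c n).
Local Notation p := (p theta c n).
Local Notation a := (a theta c n).
Local Notation T := (T theta c n).
Local Notation m := (m theta c n).

Definition X s t (B : pred 'S_N) :=
  P (fun pi => B pi && alive s t pi && wins s pi).
Definition RHSv s t (B : pred 'S_N) :=
  P (fun pi => B pi && alive s t pi && Lt t pi) * m t +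
  P (fun pi => B pi && alive s t pi && ~~ Lt t pi) * T t.+1.
Definition yy s t (B : pred 'S_N) (b1 b2 : bool) :=
  P (fun pi => B pi && alive s t pi && (Lt t pi == b1) && (s t (std pi t) == b2)).

Lemma base s B : X s n B = RHSv s n B.
Proof.
rewrite /X /RHSv (T_out theta c (ltnSn n)) mulr0 addr0.
have -> : m n = 1.
  by rewrite /m (T_out theta c (ltnSn n)) (p_n htheta) ler01.
rewrite mulr1; apply: P_ext => pi.
case: (boolP (alive s n pi)) => hal; last by rewrite !andbF.
by rewrite (wins_at (stop_last hal)) // (top_iff pi (leqnn n)) Mtn !andbT.
Qed.

Lemma P_compl (E : pred 'S_N) : P (fun pi => ~~ E pi) / Z = 1 - P E / Z.
Proof.
have e := P_split theta c predT E.
have e1 : P (fun pi => predT pi && E pi) = P E by apply: P_ext.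
have e2 : P (fun pi => predT pi && ~~ E pi) = P (fun pi => ~~ E pi) by apply: P_ext.
rewrite e1 e2 in e.
have hZ := Z_neq0 htheta c n.
rewrite -(divff hZ) /Z e; field.
by rewrite -/(PP theta c predT) -/(P predT) -e.
Qed.

Lemma det_aliveS s t : (t < n)%N -> det t (alive s t.+1 : pred 'S_N).
Proof.
move=> ht pi pi' e; rewrite !aliveS.
have htN : (t < N)%N by apply: ltnW.
by rewrite (det_alive s htN e) (det_sd s htN e).
Qed.

Lemma step_X s t B (ht : (t < n)%N) (hB : det t B) :
  X s t B = yy s t B true true * p t + X s t.+1 B.
Proof.
have htN : (t < N)%N by apply: ltnW.
rewrite /X (P_split theta c _ (fun pi => s t (std pi t))); congr (_ + _).
  have hd : det t (fun pi => B pi && alive s t pi && (Lt t pi == true) &&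
                              (s t (std pi t) == true)).
    apply: det_and; last by move=> pi pi' e; rewrite (det_sd s htN e).
    apply: det_and; last by move=> pi pi' e; rewrite (det_Lt htN e).
    exact: det_and hB (det_alive s htN).
  rewrite /yy /p -(indepP htheta hPE htN hd (einv_Mt htN)).
  apply: P_ext => pi.
  case: (boolP (alive s t pi)) => hal; last by rewrite !andbF.
  case: (boolP (s t (std pi t))) => hs; last by rewrite !andbF.
  rewrite (wins_at (stop_at ht hal hs)) ?(top_iff pi) ?(ltnW ht) //.
  by case: (B pi); case: (Lt t pi); case: (Mt t pi).
apply: P_ext => pi; rewrite aliveS.
by case: (B pi); case: (alive s t pi); case: (wins s pi); case: (s t (std pi t)).
Qed.

Lemma step_R s t B (ht : (t < n)%N) (hB : det t B) :
  RHSv s t.+1 B = P (fun pi => B pi && alive s t.+1 pi) * T t.+1.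
Proof.
have htN : (t < N)%N by apply: ltnW.
have hB' : det t (fun pi => B pi && alive s t.+1 pi).
  exact: det_and hB (det_aliveS s ht).
rewrite /RHSv.
have e1 := indepP htheta hPE htN hB' (einv_Lt ht).
have e2 := indepP htheta hPE htN hB' (einv_neg (einv_Lt ht)).
rewrite e1 e2 P_compl (T_rec theta c (ht : (t.+1 <= n)%N)) -/(a t.+1).
rewrite /a; ring.
Qed.

Lemma RHS_split s t B :
  RHSv s t B = (yy s t B true true + yy s t B true false) * m t +
              (yy s t B false true + yy s t B false false) * T t.+1.
Proof.
rewrite /RHSv /yy.
rewrite (P_split theta c (fun pi => B pi && alive s t pi && Lt t pi)
   (fun pi => s t (std pi t))).
rewrite (P_split theta c (fun pi => B pi && alive s t pi && ~~ Lt t pi)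
   (fun pi => s t (std pi t))).
congr (( _ + _) * _ + (_ + _) * _); apply: P_ext => pi;
  by case: (Lt t pi); case: (s t (std pi t)); rewrite ?andbT ?andbF.
Qed.

Lemma alive1_split s t B :
  P (fun pi => B pi && alive s t.+1 pi) = yy s t B true false + yy s t B false false.
Proof.
rewrite (P_split theta c _ (Lt t)) /yy; congr (_ + _); apply: P_ext => pi;
  rewrite aliveS; by case: (Lt t pi); case: (s t (std pi t));
  rewrite ?andbT ?andbF //= ?andbA.
Qed.

Lemma yy_ge0 s t B b1 b2 : 0 <= yy s t B b1 b2.
Proof. exact: P_ge0. Qed.

Lemma claim_le s : forall d t, (t + d = n)%N -> forall B, det t B ->
  X s t B <= RHSv s t B.
Proof.
elim=> [|d IH] t htd B hB.
  by rewrite addn0 in htd; rewrite htd base.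
have ht : (t < n)%N by rewrite -htd addnS ltnS leq_addr.
have hB1 : det t.+1 B by apply: (det_mono hB (leqnSn t)).
have htd1 : (t.+1 + d = n)%N by rewrite addSnnS.
have := IH t.+1 htd1 B hB1.
rewrite step_R // alive1_split => hIH.
rewrite step_X // RHS_split.
have h1 := m_ge_p theta c n t.
have h2 := m_ge_T theta c n t.
have hT := T_ge0 htheta c n t.+1.
have y1 := yy_ge0 s t B true true.
have y2 := yy_ge0 s t B true false.
have y3 := yy_ge0 s t B false true.
have y4 := yy_ge0 s t B false false.
have k1 := ler_wpM2l y1 h1.
have k2 := ler_wpM2l y2 h2.
have k3 := mulr_ge0 y3 hT.
move: hIH k1 k2 k3.
set Y1 := yy s t B true true; set Y2 := yy s t B true false.
set Y3 := yy s t B false true; set Y4 := yy s t B false false.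
set M := m t; set Tt := T t.+1; set Pt := p t; set Xn := X s t.+1 B.
move=> hIH k1 k2 k3.
rewrite !mulrDl.
have e : Y1 * Pt + Xn <= Y1 * Pt + (Y2 * Tt + Y4 * Tt) by rewrite lerD2l -mulrDl.
apply: (le_trans e).
rewrite addrA; apply: lerD; [exact: lerD k1 k2 | exact: ler_wpDl k3 (lexx _)].
Qed.

Lemma claim_eq k
  (hk1 : forall t, (k <= t)%N -> (t <= n)%N -> T t.+1 <= p t)
  (hk2 : forall t, (t < k)%N -> ~~ (T t.+1 <= p t)) :
  forall d t, (t + d = n)%N -> forall B, det t B ->
  X (positional k) t B = RHSv (positional k) t B.
Proof.
elim=> [|d IH] t htd B hB.
  by rewrite addn0 in htd; rewrite htd base.
have ht : (t < n)%N by rewrite -htd addnS ltnS leq_addr.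
have htN : (t < N)%N by apply: ltnW.
have hB1 : det t.+1 B by apply: (det_mono hB (leqnSn t)).
have htd1 : (t.+1 + d = n)%N by rewrite addSnnS.
have := IH t.+1 htd1 B hB1.
rewrite step_R // alive1_split => hIH.
rewrite step_X // RHS_split hIH.
have hsd : forall pi : 'S_N, positional k (std pi t) = (k <= t)%N && Lt t pi.
  by move=> pi; rewrite /positional (Lt_std pi htN).
case: (leqP k t) => hkt.
  have -> : yy (positional k) t B true false = 0.
    by apply: P0 => pi; rewrite hsd hkt /=; case: (Lt t pi); rewrite ?andbF.
  have -> : yy (positional k) t B false true = 0.
    by apply: P0 => pi; rewrite hsd hkt /=; case: (Lt t pi); rewrite ?andbF.
  rewrite /m (hk1 t hkt (ltnW ht)); ring.
have -> : yy (positional k) t B true true = 0.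
  by apply: P0 => pi; rewrite hsd leqNgt hkt /= ?andbF.
have -> : yy (positional k) t B false true = 0.
  by apply: P0 => pi; rewrite hsd leqNgt hkt /= ?andbF.
rewrite /m (negbTE (hk2 t hkt)); ring.
Qed.

End Ind.

Close Scope ring_scope.

Open Scope ring_scope.

Lemma win_probE (R : realFieldType) (theta : R) c n s :
  win_prob theta c n.+1 s = X theta c s 0 (predT : pred 'S_n.+1) / Z theta c n.
Proof.
by rewrite /win_prob /X /Z /P /PP /Wt; congr (_ / _).
Qed.

Theorem theorem3p8 (c : statistic) (N : nat) (R : realFieldType) (theta : R) :
  prefix_equivariant N c -> (1 <= N)%N -> (0 < theta)%R ->
  exists k : nat, (k < N)%N /\
    forall s : strategy,
      (win_prob theta c N s <= win_prob theta c N (positional k))%R.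
Proof.
case: N => [|n] hPE hN htheta //.
have hn : T theta c n n.+1 <= p theta c n n.
  by rewrite (T_out theta c (ltnSn n)) (p_n htheta) ler01.
have hex : exists t, T theta c n t.+1 <= p theta c n t by exists n.
case: (ex_minnP hex) => k hk hmin.
exists k; split; first by rewrite ltnS hmin.
have hk1 : forall t, (k <= t)%N -> (t <= n)%N ->
    T theta c n t.+1 <= p theta c n t.
  move=> t hkt htn.
  apply: (le_trans (T_anti_le htheta c n (hkt : (k.+1 <= t.+1)%N))).
  exact: (le_trans hk (p_mono_le htheta c n hkt)).
have hk2 : forall t, (t < k)%N -> ~~ (T theta c n t.+1 <= p theta c n t).
  by move=> t hkt; apply/negP => h; move: (hmin t h); rewrite leqNgt hkt.
have hdet : det 0 (predT : pred 'S_n.+1) by [].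
move=> s; rewrite !win_probE.
have hZ := Z_gt0 htheta c n.
rewrite ler_pM2r ?invr_gt0 //.
rewrite (@claim_eq _ _ htheta c n hPE k hk1 hk2 n 0 (add0n n) predT hdet).
apply: (le_trans (@claim_le _ _ htheta c n hPE s n 0 (add0n n) predT hdet)).
rewrite le_eqVlt; apply/orP; left; apply/eqP.
by rewrite /RHSv; congr (_ * _ + _ * _); apply: P_ext => pi; rewrite !alive0.

Qed.

Close Scope ring_scope.
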